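(* Let $(\mathcal{X},\rho,\nu)$ be a metric measure space, where $\rho$ is a separable metric and $\nu$ is a finite Borel measure. Let $c:\mathcal{X}\to\mathcal{Y}$ be a concept whose set of boundary points $\partial\mathcal{X}$ is essentially countable (i.e. $\partial\mathcal{X}$ is the union of a countable set and a $\nu$-null set). Then, in the smoothed online classification protocol against any $\nu$-dominated adversary, the 1-nearest neighbor rule satisfies $$\lim_{T\to\infty}\frac1T\sum_{t=1}^T\ell(x_t,y_t,\hat y_t)=0\quad\text{almost surely}.$$
   Context: The loss $\ell(x,y,\hat y)$ is a non-negative, bounded loss function with $\ell(x,y,y)=0$. Smoothed online classification protocol: the learner fixes a prediction strategy; the adversary, knowing it, fixes a concept $c:\mathcal{X}\to\mathcal{Y}$; at each time $t=1,2,\dots$ the adversary selects a probability distribution $\mu_t$ on $\mathcal{X}$ (possibly depending on the history) and draws $x_t\sim\mu_t$; the learner predicts $\hat y_t$ from $x_t$ and past data; it incurs loss $\ell(x_t,y_t,\hat y_t)$ where $y_t=c(x_t)$, and $(x_t,y_t,\hat y_t)$ is revealed to both. The 1-nearest neighbor rule predicts $\hat y_t=y_{\mathrm{NN}_t}$ with $\mathrm{NN}_t\in\arg\min_{\tau<t}\rho(x_t,x_\tau)$ (ties broken arbitrarily; prediction at $t=1$ arbitrary). A measure $\nu$ uniformly dominates a family $\mathcal{M}$ of probability distributions if for every $\epsilon>0$ there is $\delta>0$ with $\nu(A)<\delta\Rightarrow\mu(A)<\epsilon$ for all measurable $A$ and all $\mu\in\mathcal{M}$; an adversary is $\nu$-dominated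 if at all times it selects $\mu_t$ from a fixed family uniformly dominated by $\nu$. The margin of $x$ is $m_c(x)=\inf_{x':c(x')\neq c(x)}\rho(x,x')$, and $\partial\mathcal{X}=\{x:m_c(x)=0\}$ is the set of boundary points. *)

(* Defs.v *)
From HB Require Import structures.
From mathcomp Require Import all_boot all_order all_algebra.
From mathcomp Require Import all_classical all_reals all_analysis.
From mathcomp Require Import measurable_realfun.
Set Implicit Arguments. Unset Strict Implicit. Unset Printing Implicit Defensive.
Import Order.TTheory GRing.Theory Num.Theory.
Local Open Scope classical_set_scope.
Local Open Scope ring_scope.

Section Defs.
Context {R : realType}.

Definition is_metric {X : Type} (rho : X -> X -> R) : Prop :=
  [/\ forall x y, 0 <= rho x y,
      forall x y, rho x y = 0 <-> x = y,
      forall x y, rho x y = rho y x &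
      forall x y z, rho x z <= rho x y + rho y z].

Definition separable_metric {X : Type} (rho : X -> X -> R) : Prop :=
  exists D : set X, countable D /\
    forall x (e : R), 0 < e -> exists2 z, D z & rho x z < e.

Definition metric_open {X : Type} (rho : X -> X -> R) (U : set X) : Prop :=
  forall x, U x -> exists2 e : R, 0 < e & [set y | rho x y < e] `<=` U.

Definition borel_for {d} {X : measurableType d} (rho : X -> X -> R) : Prop :=
  forall A : set X, measurable A <-> <<s [set U | metric_open rho U] >> A.

(* margin m_c(x) = inf_{x' : c x' <> c x} rho(x,x')  (inf of empty set = +oo) *)
Definition margin {X Y : Type} (rho : X -> X -> R) (c : X -> Y) (x : X) : \bar R :=
  ereal_inf [set (rho x x')%:E | x' in [set x' | c x' <> c x]].

Definition boundary {X Y : Type} (rho : X -> X -> R) (c : X -> Y) : set X :=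
  [set x | margin rho c x = 0%E].

Definition unif_dominates {d} {X : measurableType d}
    (nu : set X -> \bar R) (M : set (probability X R)) : Prop :=
  forall eps : R, 0 < eps -> exists2 delta : R, 0 < delta &
    forall (A : set X) (mu : probability X R), measurable A -> M mu ->
      (nu A < delta%:E)%E -> (mu A < eps%:E)%E.

(* A tie-breaking rule for the 1-NN learner: given a nonempty history h of
   triples (x_tau, y_tau, yhat_tau) and a new point x, nn h x is an index
   tau < size h minimizing rho x x_tau. *)
Definition nn_rule {X Y : Type} (rho : X -> X -> R)
    (nn : seq (X * Y * Y) -> X -> nat) : Prop :=
  forall (h : seq (X * Y * Y)) (x : X) (p0 : X * Y * Y), h <> [::] ->
    (nn h x < size h)%N /\
    forall tau, (tau < size h)%N ->
      rho x (nth p0 h (nn h x)).1.1 <= rho x (nth p0 h tau).1.1.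

(* the 1-nearest neighbor prediction; [first] is the arbitrary prediction at t = 1 *)
Definition oneNN {X Y : Type} (first : X -> Y) (nn : seq (X * Y * Y) -> X -> nat)
    (h : seq (X * Y * Y)) (x : X) : Y :=
  match h with
  | [::] => first x
  | _ => (nth (x, first x, first x) h (nn h x)).1.2
  end.

(* history of the first t rounds (rounds indexed 0,1,...) given the instance
   sequence xs: triples (x_tau, c x_tau, yhat_tau) *)
Fixpoint history {X Y : Type} (c : X -> Y) (first : X -> Y)
    (nn : seq (X * Y * Y) -> X -> nat) (xs : nat -> X) (t : nat) : seq (X * Y * Y) :=
  match t with
  | 0 => [::]
  | t'.+1 => let h := history c first nn xs t' in
             rcons h (xs t', c (xs t'), oneNN first nn h (xs t'))
  end.

Definition past_sigma {dO d} {Omega : measurableType dO} {X : measurableType d}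
    (Xs : nat -> Omega -> X) (t : nat) : set (set Omega) :=
  <<s \bigcup_(i in [set i : nat | (i < t)%N]) [set Xs i @^-1` A | A in @measurable d X] >>.

End Defs.

(* Main.v *)
Require Import Defs.
From HB Require Import structures.
From mathcomp Require Import all_boot all_order all_algebra.
From mathcomp Require Import all_classical all_reals all_analysis.
From mathcomp Require Import measurable_realfun.
From mathcomp Require Import ring lra zify.
Import Order.TTheory GRing.Theory Num.Theory.
Import numFieldNormedType.Exports.
Local Open Scope classical_set_scope.
Local Open Scope ring_scope.
Lemma geom_bound (R : realType) (n k : nat) : (2 * n.+1 <= k)%N ->
  (2 ^+ n * (2^-1) ^+ k <= (2^-1) ^+ n.+1 :> R).
Proof.
move=> hk.
have y0 : (0 : R) <= 2^-1 by rewrite invr_ge0.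
have y1 : (2^-1 : R) <= 1 by rewrite invf_le1 // ler1n.
apply: (le_trans (y := 2 ^+ n * (2^-1) ^+ (n + n.+2))).
  by rewrite ler_wpM2l ?exprn_ge0 // ler_wiXn2l //; lia.
rewrite exprD mulrA -exprMn divff ?pnatr_eq0 // expr1n mul1r.
exact: ler_wiXn2l.
Qed.

Lemma geom_series_fin (R : realType) :
  (\sum_(0 <= n <oo) (((2:R)^-1) ^+ n.+1)%:E < +oo)%E.
Proof.
have h := @cvg_geometric_eseries_half R 1 0.
have e : (fun k => ((1:R) / (2 ^ (k + 1))%:R)%:E) = (fun n => (((2:R)^-1) ^+ n.+1)%:E).
  by apply: funext => k; rewrite natrX div1r -exprVn addn1.
rewrite e in h.
have := cvg_lim _ h; rewrite /eseries => ->//.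
by rewrite expr0 divr1 ltry.
Qed.
Fixpoint ev {Omega : Type} (I : nat -> set Omega) (T m : nat) : set Omega :=
  match m with
  | 0 => setT
  | m'.+1 => match T with
            | 0 => set0
            | T'.+1 => ev I T' m `|` (ev I T' m' `&` I T')
            end
  end.

Definition cnt {Omega : Type} (I : nat -> set Omega) (w : Omega) (T : nat) : nat :=
  (\sum_(t < T) `[< I t w >])%N.

Lemma cntS {Omega : Type} (I : nat -> set Omega) w T :
  cnt I w T.+1 = (cnt I w T + `[< I T w >])%N.
Proof. by rewrite /cnt big_ord_recr. Qed.

Lemma ev_cnt {Omega : Type} (I : nat -> set Omega) w T m :
  ev I T m w <-> (m <= cnt I w T)%N.
Proof.
elim: T m => [|T IH] [|m] //=.
- by rewrite /cnt big_ord0.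
- rewrite cntS; split.
  + case => [/IH|[/IH h hI]]; first by move/leq_trans; apply; rewrite leq_addr.
    by rewrite (asboolT hI) addn1.
  + case: (pselect (I T w)) => hI.
      rewrite (asboolT hI) addn1 ltnS => h.
      by right; split => //; apply/IH.
    by rewrite (asboolF hI) addn0 => h; left; apply/IH.
Qed.

Lemma ev_past {Omega : Type} (I : nat -> set Omega) (past : nat -> set (set Omega))
  (HT : forall t, past t setT) (H0 : forall t, past t set0)
  (HU : forall t A B, past t A -> past t B -> past t (A `|` B))
  (HI : forall t A B, past t A -> past t B -> past t (A `&` B))
  (Hmono : forall t A, past t A -> past t.+1 A)
  (HIt : forall t, past t.+1 (I t)) :
  forall T m, past T (ev I T m).
Proof.
elim=> [|T IH] [|m] //=.
apply: HU; first exact: Hmono.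
apply: HI; [exact: Hmono | exact: HIt].
Qed.

Lemma ev_bound d (Omega : measurableType d) (R : realType) (P : probability Omega R)
  (I : nat -> set Omega) (past : nat -> set (set Omega))
  (Hpast : forall T m, past T (ev I T m))
  (Hpm : forall t A, past t A -> measurable A)
  (HIm : forall t, measurable (I t))
  (p : nat -> Omega -> \bar R) (eps : R) (eps0 : 0 <= eps)
  (pm : forall t, measurable_fun setT (p t))
  (p0 : forall t w, (0 <= p t w)%E) (pe : forall t w, (p t w <= eps%:E)%E)
  (Hlaw : forall t F, past t F -> P (F `&` I t) = (\int[P]_(w in F) p t w)%E) :
  forall T m, (P (ev I T m) <= (2 ^+ T * eps ^+ m)%:E)%E.
Proof.
have ev_m T m : measurable (ev I T m) by apply: Hpm; apply: Hpast.
elim=> [|T IH] [|m] /=.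
- by rewrite probability_setT expr0 mulr1.
- by rewrite measure0 lee_fin mulr_ge0 ?exprn_ge0.
- by rewrite probability_setT expr0 mulr1 lee_fin exprn_ege1// ler1n.
- have hU : (P (ev I T m.+1 `|` (ev I T m `&` I T)) <= P (ev I T m.+1) + P (ev I T m `&` I T))%E.
    by apply: measureU2 => //; apply: measurableI.
  apply: (le_trans hU).
  rewrite (Hlaw _ _ (Hpast T m)).
  have h2 : (\int[P]_(w in ev I T m) p T w <= eps%:E * P (ev I T m))%E.
    rewrite -(integral_cst P (ev_m T m)).
    apply: ge0_le_integral => //.
    exact: measurable_funS (pm T).
  rewrite (le_trans (leeD (IH m.+1) h2))//.
  rewrite (le_trans (leeD (lexx _) (lee_wpmul2l _ (IH m))))// ?lee_fin//.
  by rewrite le_eqVlt; apply/orP; left; apply/eqP; rewrite !exprS; ring.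
Qed.

Lemma bc_freq d (Omega : measurableType d) (R : realType) (P : probability Omega R)
  (I : nat -> set Omega) (past : nat -> set (set Omega)) (q : nat) (q0 : (0 < q)%N)
  (Hpast : forall T m, past T (ev I T m))
  (Hpm : forall t A, past t A -> measurable A)
  (HIm : forall t, measurable (I t))
  (p : nat -> Omega -> \bar R)
  (pm : forall t, measurable_fun setT (p t))
  (p0 : forall t w, (0 <= p t w)%E)
  (pe : forall t w, (p t w <= (((2:R)^-1) ^+ (2*q))%:E)%E)
  (Hlaw : forall t F, past t F -> P (F `&` I t) = (\int[P]_(w in F) p t w)%E) :
  exists Z, measurable Z /\ P Z = 0%E /\
    forall w, ~ Z w -> exists N, forall T, (N <= T)%N -> (cnt I w T <= T %/ q)%N.
Proof.
pose F T := ev I T (T %/ q).+1.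
have mF k : measurable (F k) by apply: Hpm; apply: Hpast.
exists (lim_sup_set F); split; [|split].
- apply: bigcapT_measurable => n; apply: bigcup_measurable => j _; exact: mF.
- apply: lim_sup_set_cvg0 => //.
  apply: le_lt_trans (geom_series_fin R).
  apply: lee_nneseries => // n _.
  have eps0 : (0:R) <= 2^-1 ^+ (2*q) by rewrite exprn_ge0 // invr_ge0.
  have hb : (P (F n) <= (2 ^+ n * (2^-1 ^+ (2*q)) ^+ (n %/ q).+1)%:E)%E.
    exact: (@ev_bound _ _ _ P I past Hpast Hpm HIm p _ eps0 pm p0 pe Hlaw n (n %/ q).+1).
  apply: le_trans hb _.
  rewrite lee_fin -exprM geom_bound //.
  have := ltn_ceil n q0; rewrite -mulnA; lia.
- move=> w nZ.
  have [N hN] : exists N, ~ (\bigcup_(j in [set j | (N <= j)%N]) F j) w.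
    case: (pselect (exists N, ~ (\bigcup_(j in [set j | (N <= j)%N]) F j) w)) => // hno.
    exfalso; apply: nZ => n _; apply: contra_notP hno => hn; by exists n.
  exists N => T NT; rewrite leqNgt; apply/negP => h; apply: hN.
  by exists T => //; apply/ev_cnt.
Qed.
Lemma enum_countable (T : Type) (x0 : T) (A : set T) : countable A ->
  exists g : nat -> T, forall a, A a -> exists n, g n = a.
Proof.
move=> /countable_injP[f finj].
exists (fun n => match pselect (exists a, A a /\ f a = n) with
              | left h => projT1 (cid h) | right _ => x0 end).
move=> a Aa; exists (f a).
case: pselect => [h|]; last by move=> nh; exfalso; apply: nh; exists a.
case: (cid h) => b [Ab fb] /=.
by apply: finj; rewrite ?inE.
Qed.

Lemma size_history (X Y : Type) (c : X -> Y) first nn (xs : nat -> X) t :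
  size (history c first nn xs t) = t.
Proof. by elim: t => //= t IH; rewrite size_rcons IH. Qed.

Lemma nth_history (X Y : Type) (c : X -> Y) first nn (xs : nat -> X) t p0 tau :
  (tau < t)%N ->
  nth p0 (history c first nn xs t) tau =
  (xs tau, c (xs tau), oneNN first nn (history c first nn xs tau) (xs tau)).
Proof.
elim: t => // t IH; rewrite ltnS leq_eqVlt => /orP[/eqP->|lt] /=.
  by rewrite nth_rcons size_history ltnn eqxx.
by rewrite nth_rcons size_history lt IH.
Qed.

Lemma oneNN_ne (X Y : Type) (first : X -> Y) nn (h : seq (X * Y * Y)) x :
  h <> [::] -> oneNN first nn h x = (nth (x, first x, first x) h (nn h x)).1.2.
Proof. by case: h. Qed.

Lemma nn_correct (R : realType) (X Y : Type) (rho : X -> X -> R) (c : X -> Y)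
  first nn (Hnn : nn_rule rho nn) (xs : nat -> X) (U : set X)
  (HU : forall x y x', U x -> U y -> rho x x' <= rho x y -> c x' = c x)
  t tau : (tau < t)%N -> U (xs t) -> U (xs tau) ->
  oneNN first nn (history c first nn xs t) (xs t) = c (xs t).
Proof.
move=> lt Ut Utau.
set h := history c first nn xs t.
have hs : size h = t by rewrite size_history.
have hne : h <> [::] by move=> e; move: hs; rewrite e /= => h0; rewrite -h0 in lt.
have [hj hmin] := Hnn h (xs t) (xs t, c (xs t), first (xs t)) hne.
rewrite hs in hj.
have e1 := @nth_history X Y c first nn xs t (xs t, c (xs t), first (xs t)) _ hj.
have e2 := @nth_history X Y c first nn xs t (xs t, c (xs t), first (xs t)) _ lt.
have := hmin tau; rewrite hs => /(_ lt).
rewrite -/h in e1 e2; rewrite e1 e2 /= => hle.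
have := HU _ _ _ Ut Utau hle.
have e1' := @nth_history X Y c first nn xs t (xs t, first (xs t), first (xs t)) _ hj.
by rewrite oneNN_ne // -/h e1'.
Qed.

Lemma first_visit_sum (a : nat -> Prop) T :
  (\sum_(t < T) `[< a t /\ forall tau, (tau < t)%N -> ~ a tau >])%N =
  `[< exists tau, (tau < T)%N /\ a tau >].
Proof.
elim: T => [|T IH]; first by rewrite big_ord0 asboolF // => -[tau []].
rewrite big_ord_recr /= IH.
case: (pselect (exists tau, (tau < T)%N /\ a tau)) => h.
  rewrite (asboolT h) asboolF; last by case=> _ hh; case: h => tau [lt]; apply: hh.
  rewrite (asboolT) //; case: h => tau [lt atau]; exists tau; split => //; exact: ltnW.
rewrite (asboolF h) add0n.
case: (pselect (a T)) => aT.
  rewrite asboolT; last by split => // tau lt atau; apply: h; exists tau.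
  by rewrite asboolT //; exists T.
rewrite asboolF; last by case.
rewrite asboolF // => -[tau [lt atau]].
move: lt; rewrite ltnS leq_eqVlt => /orP[/eqP e|lt]; first by apply: aT; rewrite -e.
by apply: h; exists tau.
Qed.

Lemma first_sum (A : nat -> nat -> Prop) n T :
  (\sum_(t < T) `[< exists i, (i < n)%N /\ A i t /\ forall tau, (tau < t)%N -> ~ A i tau >] <= n)%N.
Proof.
apply: (@leq_trans (\sum_(t < T) \sum_(i < n) `[< A i t /\ forall tau, (tau < t)%N -> ~ A i tau >])%N).
  apply: leq_sum => t _.
  case: (pselect (exists i, (i < n)%N /\ A i t /\ forall tau, (tau < t)%N -> ~ A i tau)) => h.
    case: (h) => i [hi hA].
    rewrite (asboolT h) (bigD1 (Ordinal hi)) //= asboolT //.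
  by rewrite (asboolF h).
rewrite exchange_big /=.
apply: (@leq_trans (\sum_(i < n) 1)%N); last by rewrite sum1_card card_ord.
apply: leq_sum => i _.
rewrite (first_visit_sum (fun t => A i t)).
by case: asboolP.
Qed.

Set Implicit Arguments. Unset Strict Implicit.
Lemma sa_setT (T : Type) (G : set (set T)) : sigma_algebra setT G -> G setT.
Proof. by case=> h0 hC _; rewrite -(setD0 setT); apply: hC. Qed.

Lemma sa_setC (T : Type) (G : set (set T)) A : sigma_algebra setT G -> G A -> G (~` A).
Proof. by case=> h0 hC _ /hC; rewrite setTD. Qed.

Lemma sa_setU (T : Type) (G : set (set T)) A B : sigma_algebra setT G ->
  G A -> G B -> G (A `|` B).
Proof.
case=> h0 hC hU GA GB.
have -> : A `|` B = \bigcup_k (if k == 0%N then A else B).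
  apply/seteqP; split => x.
    by case=> h; [exists 0%N | exists 1%N].
  by case=> k _; case: eqP => _ h; [left|right].
by apply: hU => k; case: eqP.
Qed.

Lemma sa_setI (T : Type) (G : set (set T)) A B : sigma_algebra setT G ->
  G A -> G B -> G (A `&` B).
Proof.
move=> sG GA GB; rewrite -(setCK (A `&` B)) setCI.
by apply: sa_setC => //; apply: sa_setU => //; apply: sa_setC.
Qed.

Lemma ball_open (R : realType) (X : Type) (rho : X -> X -> R) (Hm : is_metric rho)
  z r : metric_open rho [set y | rho z y < r].
Proof.
case: Hm => h0 h1 hs ht.
move=> y /= hy; exists (r - rho z y); first by rewrite subr_gt0.
move=> y' /= hy'; apply: le_lt_trans (ht z y y') _.
by rewrite -ltrBrDl.
Qed.

Lemma measurable_ball (R : realType) d (X : measurableType d) (rho : X -> X -> R)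
  (Hm : is_metric rho) (Hb : borel_for rho) z r : measurable [set y | rho z y < r].
Proof. by apply/Hb; apply: sub_gen_smallest; exact: ball_open. Qed.

Lemma measurable_set1' (R : realType) d (X : measurableType d) (rho : X -> X -> R)
  (Hm : is_metric rho) (Hb : borel_for rho) (x : X) : measurable [set x].
Proof.
rewrite -(setCK [set x]); apply: measurableC; apply/Hb; apply: sub_gen_smallest.
case: Hm => h0 h1 hs ht.
move=> y /= hy; exists (rho x y).
  rewrite lt_neqAle h0 andbT; apply/eqP => e; apply: hy.
  by apply/h1; rewrite e.
move=> y' /= hy' e; rewrite e hs in hy'.
by rewrite ltxx in hy'.
Qed.

Lemma margin_pos (R : realType) (X Y : Type) (rho : X -> X -> R) (c : X -> Y)
  (Hm : is_metric rho) x : margin rho c x <> 0%E ->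
  exists r : R, 0 < r /\ forall x', c x' <> c x -> r <= rho x x'.
Proof.
move=> hm.
have lb : forall x', c x' <> c x -> (margin rho c x <= (rho x x')%:E)%E.
  by move=> x' hx'; apply: ereal_inf_lbound; exists x'.
have ge0 : (0 <= margin rho c x)%E.
  apply/ereal_infP => _ [x' _ <-]; rewrite lee_fin; by case: Hm.
move: hm ge0 lb; case: (margin rho c x) => [r| |] hm ge0 lb.
- exists r; split.
    by rewrite lt_neqAle -lee_fin ge0 andbT eq_sym; apply/eqP => e; apply: hm; rewrite e.
  by move=> x' /lb; rewrite lee_fin.
- by exists 1; split => // x' /lb; rewrite leye_eq.
- by [].
Qed.

Definition ballc (R : realType) (X : Type) (rho : X -> X -> R) (z : nat -> X) (k j : nat) : set X :=
  [set y | rho (z j) y < (k.+1%:R)^-1].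

Definition mono (R : realType) (X Y : Type) (rho : X -> X -> R) (c : X -> Y) (z : nat -> X) (k j : nat) : Prop :=
  forall y y', rho (z j) y < 3 * (k.+1%:R)^-1 -> rho (z j) y' < 3 * (k.+1%:R)^-1 -> c y = c y'.

Definition cellf (R : realType) (X Y : Type) (rho : X -> X -> R) (c : X -> Y)
  (z e : nat -> X) (i : nat) : set X :=
  match (choice.unpickle i : option ((nat * nat) + nat)) with
  | Some (inl (k, j)) => if pselect (mono rho c z k j) then ballc rho z k j else set0
  | Some (inr i') => [set e i']
  | None => set0
  end.

Lemma cellf_Q (R : realType) (X Y : Type) (rho : X -> X -> R) (c : X -> Y)
  (Hm : is_metric rho) z e i x y x' :
  cellf rho c z e i x -> cellf rho c z e i y -> rho x x' <= rho x y -> c x' = c x.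
Proof.
case: Hm => h0 h1 hs ht.
rewrite /cellf; case: (choice.unpickle i) => [[[k j]|i']|] //.
- case: pselect => // hmono; rewrite /ballc /= => hx hy hle.
  have u0 : 0 < (k.+1%:R : R)^-1 by rewrite invr_gt0 ltr0n.
  have t1 := ht (z j) x x'; have t2 := ht x (z j) y.
  rewrite (hs x (z j)) in t2.
  move: hx hy u0 t1 t2 hle; set u := (k.+1%:R : R)^-1 => hx hy u0 t1 t2 hle.
  apply: hmono; rewrite -/u; lra.
- move=> /= -> -> hle.
  have r0 : rho (e i') (e i') = 0 by apply/h1.
  rewrite r0 in hle.
  have : rho (e i') x' = 0 by apply/le_anti; rewrite hle h0.
  by move/h1 => ->.
Qed.

Lemma cellf_meas (R : realType) d (X : measurableType d) (Y : Type) (rho : X -> X -> R) (c : X -> Y)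
  (Hm : is_metric rho) (Hb : borel_for rho) z e i : measurable (cellf rho c z e i).
Proof.
rewrite /cellf; case: (choice.unpickle i) => [[[k j]|i']|] //.
- by case: (pselect (mono rho c z k j)) => hh /=; [exact: measurable_ball|].
- exact: (@measurable_set1' R d X rho Hm Hb (e i')).
Qed.

Lemma cellf_cover (R : realType) (X Y : Type) (rho : X -> X -> R) (c : X -> Y)
  (Hm : is_metric rho) (z e : nat -> X) (N C : set X)
  (Hz : forall x (r : R), 0 < r -> exists j, rho x (z j) < r)
  (He : forall x, C x -> exists i, e i = x)
  (HN : boundary rho c `\` C `<=` N) :
  forall x, ~ N x -> exists i, cellf rho c z e i x.
Proof.
move=> x nN.
case: (pselect (boundary rho c x)) => hb.
  have Cx : C x by apply: contra_notP nN => nC; apply: HN.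
  have [i ei] := He x Cx.
  exists (choice.pickle (inr i : (nat * nat) + nat)).
  by rewrite /cellf choice.pickleK /= ei.
have [r [r0 hr]] := margin_pos Hm hb.
pose k := Num.Def.trunc (4 / r).
have kgt : 4 / r < k.+1%:R by exact: truncnS_gt.
set u := (k.+1%:R : R)^-1.
have K0 : (0 : R) < k.+1%:R by rewrite ltr0n.
have u0 : 0 < u by rewrite invr_gt0.
have u4 : 4 * u < r.
  rewrite /u -/(4 / (k.+1%:R : R)) ltr_pdivrMr //.
  by move: kgt; rewrite ltr_pdivrMr // mulrC.
have [j hj] := Hz x u u0.
exists (choice.pickle (inl (k, j) : (nat * nat) + nat)).
rewrite /cellf choice.pickleK /=.
case: Hm => h0 h1 hs ht.
have cx : forall y, rho (z j) y < 3 * u -> c y = c x.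
  move=> y hy; case: (pselect (c y = c x)) => // ne; exfalso.
  have := hr _ ne; have := ht x (z j) y; lra.
case: (pselect (mono rho c z k j)) => hn /=; first by rewrite /ballc /= hs.
exfalso; apply: hn => y y' hy hy'.
by rewrite (cx y) ?(cx y').
Qed.

Lemma det_bound (R : realType) (X Y : Type) (rho : X -> X -> R) (c : X -> Y)
  first nn (Hnn : nn_rule rho nn) (loss : X -> Y -> Y -> R) (B : R)
  (Hl0 : forall x y y', 0 <= loss x y y') (HlB : forall x y y', loss x y y' <= B)
  (Hld : forall x y, loss x y y = 0)
  (cell : nat -> set X)
  (HQ : forall i x y x', cell i x -> cell i y -> rho x x' <= rho x y -> c x' = c x)
  (N Rn : set X) (n : nat)
  (Hcov : forall x, ~ N x -> ~ Rn x -> exists i, (i < n)%N /\ cell i x)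
  (xs : nat -> X) (HxN : forall t, ~ N (xs t)) T :
  \sum_(t < T) loss (xs t) (c (xs t)) (oneNN first nn (history c first nn xs t) (xs t))
  <= B * (n%:R + (\sum_(t < T) `[< Rn (xs t) >])%N%:R).
Proof.
have B0 : 0 <= B by apply: le_trans (HlB (xs 0) (c (xs 0)) (c (xs 0))); apply: Hl0.
pose f t := `[< exists i, (i < n)%N /\ cell i (xs t) /\ forall tau, (tau < t)%N -> ~ cell i (xs tau) >].
apply: (@le_trans _ _ (\sum_(t < T) B * ((f t)%:R + (`[< Rn (xs t) >] : nat)%:R))).
  apply: ler_sum => t _.
  case: (pselect (Rn (xs t))) => hR.
    rewrite (asboolT hR) /=; apply: le_trans (HlB _ _ _) _.
    by rewrite ler_peMr // lerDr.
  have [i [hi ci]] := Hcov _ (HxN t) hR.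
  case: (pselect (exists tau, (tau < t)%N /\ cell i (xs tau))) => hv.
    case: hv => tau [lt ct].
    rewrite (@nn_correct _ _ _ rho c first nn Hnn xs (cell i) (HQ i) t tau lt ci ct) Hld.
    by rewrite mulr_ge0 // addr_ge0.
  have ft : f t by apply/asboolP; exists i; split => //; split => // tau lt ct; apply: hv; exists tau.
  rewrite /f (asboolT (asboolW ft)) /=; apply: le_trans (HlB _ _ _) _.
  by rewrite ler_peMr // lerDl.
rewrite -mulr_sumr ler_wpM2l // big_split /= -!natr_sum lerD2r ler_nat.
exact: (first_sum (fun i t => cell i (xs t))).
Qed.

Set Implicit Arguments. Unset Strict Implicit.

Lemma ereal_small0 (R : realType) (x : \bar R) : (0 <= x)%E ->
  (forall eps : R, 0 < eps -> (x < eps%:E)%E) -> x = 0%E.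
Proof.
case: x => [r| |] // h0 h.
  have := h r; rewrite lte_fin ltxx => hr.
  move: h0; rewrite lee_fin le_eqVlt => /orP[/eqP <-//|/hr//].
by have := h 1 ltr01.
Qed.

Lemma dom_null (R : realType) d (X : measurableType d) (nu : {measure set X -> \bar R})
  (M : set (probability X R)) (HM : unif_dominates nu M) (mu : probability X R)
  (Mmu : M mu) (A : set X) (mA : measurable A) (nA : nu A = 0%E) : mu A = 0%E.
Proof.
apply: ereal_small0 => // eps e0.
have [delta d0 h] := HM eps e0.
by apply: h => //; rewrite nA lte_fin.
Qed.
Lemma conv_lemma (R : realType) (a : nat -> R) (B : R) (B0 : 0 <= B)
  (ha0 : forall T, 0 <= a T)
  (H : forall q : nat, exists n N0 : nat, forall T, (N0 <= T)%N ->
      exists k : nat, (k * q.+1 <= T)%N /\ a T <= B * (n%:R + k%:R)) :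
  (fun T => (T%:R)^-1 * a T) @ \oo --> (0 : R^o).
Proof.
apply/cvgr0Pnorm_lt => eps e0.
pose q := Num.Def.trunc (2 * B / eps).
have hq : 2 * B / eps < q.+1%:R by exact: truncnS_gt.
have hq' : 2 * B < eps * q.+1%:R by rewrite (mulrC eps) -ltr_pdivrMr.
have [n [N0 hN]] := H q.
pose T1 := (Num.Def.trunc (2 * B * n%:R / eps)).+1.
have hT1 : 2 * B * n%:R / eps < T1%:R by exact: truncnS_gt.
near=> T.
have hN0 : (N0 <= T)%N by near: T; exact: nbhs_infty_ge.
have hT : (T1 <= T)%N by near: T; exact: nbhs_infty_ge.
have [k [hk ha]] := hN T hN0.
have T0 : (0 < T)%N by apply: leq_trans hT.
have TR : (0 : R) < T%:R by rewrite ltr0n.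
have hT' : 2 * B * n%:R < eps * T%:R.
  have h1 : 2 * B * n%:R / eps < T%:R by apply: (lt_le_trans hT1); rewrite ler_nat.
  by move: h1; rewrite ltr_pdivrMr // (mulrC eps).
have hkR : k%:R * q.+1%:R <= T%:R :> R by rewrite -natrM ler_nat.
have k0 : (0 : R) <= k%:R by [].
have hBk : 2 * B * k%:R <= eps * T%:R.
  have h1 := ler_wpM2r k0 (ltW hq').
  have h2 : eps * (k%:R * q.+1%:R) <= eps * T%:R by rewrite ler_pM2l.
  nra.
rewrite normrM ger0_norm ?invr_ge0 // ger0_norm // mulrC ltr_pdivrMr //.
apply: le_lt_trans ha _; nra.
Unshelve. all: by end_near.
Qed.

Unset Implicit Arguments.

Theorem theorem1 (R : realType)
  (* metric measure space (X, rho, nu) *)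
  (d : measure_display) (X : measurableType d) (rho : X -> X -> R)
  (Hmetric : is_metric rho) (Hsep : separable_metric rho) (Hborel : borel_for rho)
  (nu : {measure set X -> \bar R}) (Hfin : (nu setT < +oo)%E)
  (* labels, concept, loss *)
  (Y : Type) (c : X -> Y)
  (Hbd : exists C : set X, countable C /\ nu.-negligible (boundary rho c `\` C))
  (loss : X -> Y -> Y -> R)
  (Hloss_nonneg : forall x y y', 0 <= loss x y y')
  (Hloss_bdd : exists B : R, forall x y y', loss x y y' <= B)
  (Hloss_diag : forall x y, loss x y y = 0)
  (* the 1-NN learner (arbitrary tie-breaking and arbitrary first prediction) *)
  (first : X -> Y) (nn : seq (X * Y * Y) -> X -> nat) (Hnn : nn_rule rho nn)
  (* the nu-dominated adaptive adversary *)
  (M : set (probability X R)) (HM : unif_dominates nu M)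
  (adv : nat -> seq (X * Y * Y) -> probability X R)
  (Hadv : forall t h, M (adv t h))
  (* the resulting random process x_0, x_1, ... on a probability space *)
  (dO : measure_display) (Omega : measurableType dO) (P : probability Omega R)
  (Xs : nat -> Omega -> X) (HXs : forall t, measurable_fun setT (Xs t))
  (Hlaw_meas : forall t (A : set X), measurable A ->
     forall B : set (\bar R), measurable B ->
       past_sigma Xs t
         ((fun w => adv t (history c first nn (fun i => Xs i w) t) A) @^-1` B))
  (Hlaw : forall t (A : set X), measurable A ->
     forall F : set Omega, past_sigma Xs t F ->
       P (F `&` Xs t @^-1` A) =
       (\int[P]_(w in F) adv t (history c first nn (fun i => Xs i w) t) A)%E) :
  {ae P, forall w,
     (fun T : nat => (T%:R)^-1 * \sum_(t < T)
         loss (Xs t w) (c (Xs t w))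
              (oneNN first nn (history c first nn (fun i => Xs i w) t) (Xs t w)))
     @ \oo --> (0 : R^o)}.
Proof.
case: Hsep => D [Dc Dd].
have [z hz] := @enum_countable X point D Dc.
have Hz : forall x (r : R), 0 < r -> exists j, rho x (z j) < r.
  move=> x r r0; have [y Dy hy] := Dd x r r0; have [j ej] := hz y Dy.
  by exists j; rewrite ej.
case: Hbd => C [Cc [N [mN N0 HN]]].
have [e he] := @enum_countable X point C Cc.
pose cell := cellf rho c z e.
pose S n := \bigcup_(i in [set i | (i < n)%N]) cell i.
pose Rn n := ~` (S n `|` N).
have mcell i : measurable (cell i) by exact: cellf_meas.
have mS n : measurable (S n) by apply: bigcup_measurable => i _; exact: mcell.
have mR n : measurable (Rn n) by apply: measurableC; apply: measurableU.
have cover := cellf_cover Hmetric Hz he HN.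
have Rsmall : forall delta : R, 0 < delta -> exists n, (nu (Rn n) < delta%:E)%E.
  move=> delta d0.
  have ni : nonincreasing_seq Rn.
    move=> m n mn; apply/subsetPset => x /=; apply: contra_not.
    case=> [[i /= im ci]|nx]; [left; exists i => //=; exact: leq_trans im mn|by right].
  have cap0 : \bigcap_n Rn n = set0.
    apply/seteqP; split => // x /= hx.
    case: (pselect (N x)) => nx; first by apply: (hx 0%N I); right.
    have [i ci] := cover x nx.
    by apply: (hx i.+1 I); left; exists i => /=.
  have R0 : (nu (Rn 0%N) < +oo)%E.
    by apply: le_lt_trans Hfin; apply: le_measure; rewrite ?inE.
  have cv := @nonincreasing_cvg_mu _ _ _ nu Rn R0 mR (bigcapT_measurable mR) ni.
  rewrite cap0 measure0 in cv.
  have [n _ hn] := cv _ (@nbhs_open_ereal_lt R 0 (fun=> delta) d0).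
  by exists n; exact: (hn n (leqnn n)).
pose hist w t := history c first nn (fun i => Xs i w) t.
have sap t : sigma_algebra setT (past_sigma Xs t) := smallest_sigma_algebra _ _.
have past_meas t A : past_sigma Xs t A -> measurable A.
  apply: smallest_sub; first exact: sigma_algebra_measurable.
  move=> B [i _ [A' mA' <-]]; rewrite -[X in measurable X]setTI; exact: HXs.
have past_mono t A : past_sigma Xs t A -> past_sigma Xs t.+1 A.
  apply: sub_sigma_algebra2 => B [i /= it hB]; exists i => //=; exact: ltnW.
have past_pre t A : measurable A -> past_sigma Xs t.+1 (Xs t @^-1` A).
  by move=> mA; apply: sub_sigma_algebra; exists t => //=; exists A.
have Hq : forall q : nat, exists nZ : nat * set Omega, [/\ measurable nZ.2, P nZ.2 = 0%E &
     forall w, ~ nZ.2 w -> exists N0, forall T, (N0 <= T)%N ->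
       (cnt (fun t => Xs t @^-1` Rn nZ.1) w T <= T %/ q.+1)%N].
  move=> q.
  pose eps : R := 2^-1 ^+ (2 * q.+1).
  have e0 : 0 < eps by rewrite exprn_gt0 // invr_gt0.
  have [delta d0 hd] := HM eps e0.
  have [n hn] := Rsmall delta d0.
  pose I t := Xs t @^-1` Rn n.
  pose p t w := adv t (hist w t) (Rn n).
  have Hpast := @ev_past Omega I (past_sigma Xs) (fun t => sa_setT (sap t))
     (fun t => match sap t with And3 h _ _ => h end) (fun t A B => @sa_setU _ _ A B (sap t))
     (fun t A B => @sa_setI _ _ A B (sap t)) past_mono (fun t => past_pre t _ (mR n)).
  have HIm t : measurable (I t) by apply: past_meas; exact: past_pre.
  have pm t : measurable_fun setT (p t).
    move=> _ B mB; rewrite setTI; apply: (past_meas t).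
    exact: (Hlaw_meas t _ (mR n) B mB).
  have p0 t w : (0 <= p t w)%E by apply: measure_ge0.
  have pe t w : (p t w <= eps%:E)%E.
    by apply/ltW; apply: hd => //; exact: Hadv.
  have Hl t F : past_sigma Xs t F -> P (F `&` I t) = (\int[P]_(w in F) p t w)%E.
    by move=> hF; apply: Hlaw => //; exact: mR.
  have [Z [mZ [PZ hZ]]] := @bc_freq dO Omega R P I (past_sigma Xs) q.+1 (ltn0Sn q)
     Hpast past_meas HIm p pm p0 pe Hl.
  by exists (n, Z); split.
have [nZ hnZ] := choice Hq.
pose Z0 := \bigcup_t (Xs t @^-1` N).
have Z0n : P.-negligible Z0.
  apply: negligible_bigcup => t; exists (Xs t @^-1` N); split => //.
  - exact: past_meas (past_pre t _ mN).
  - have e1 := Hlaw t N mN setT (sa_setT (sap t)); rewrite setTI in e1.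
    etransitivity; first exact: e1.
    rewrite (_ : (fun w => _) = cst 0%E); first exact: integral0.
    apply: funext => w; apply: (dom_null HM (Hadv _ _) mN N0).
have Zqn : P.-negligible (\bigcup_q (nZ q).2).
  apply: negligible_bigcup => q; have [m0 p0 _] := hnZ q; by exists (nZ q).2; split.
have [B HB] := Hloss_bdd.
have B0 : 0 <= B by apply: le_trans (HB point (c point) (c point)); apply: Hloss_nonneg.
apply: (negligibleS _ (negligibleU Z0n Zqn)).
move=> w /= hw; apply: contra_notP hw => hnot.
have HxN t : ~ N (Xs t w) by move=> h; apply: hnot; left; exists t.
apply: conv_lemma B0 _ _.
- by move=> T; apply: sumr_ge0 => t _; exact: Hloss_nonneg.
- move=> q; have [_ _ hZ] := hnZ q.
  have [M0 hN0] : exists M0, forall T, (M0 <= T)%N ->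
       (cnt (fun t => Xs t @^-1` Rn (nZ q).1) w T <= T %/ q.+1)%N.
    by apply: hZ => h; apply: hnot; right; exists q.
  exists (nZ q).1, M0 => T hT.
  exists (cnt (fun t => Xs t @^-1` Rn (nZ q).1) w T); split.
    have := hN0 T hT; rewrite -(leq_pmul2r (ltn0Sn q)) => h.
    by apply: leq_trans h _; exact: leq_trunc_div.
  have HQ : forall i x y x', cell i x -> cell i y -> rho x x' <= rho x y -> c x' = c x.
    by move=> i x y x'; apply: cellf_Q.
  have Hcov : forall x, ~ N x -> ~ Rn (nZ q).1 x -> exists i, (i < (nZ q).1)%N /\ cell i x.
    move=> x nx nR.
    have : (S (nZ q).1 `|` N) x by apply: contra_notP nR.
    by case=> // -[i /= hi ci]; exists i.
  exact: (@det_bound _ _ _ rho c first nn Hnn loss B Hloss_nonneg HB Hloss_diag cell HQ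
            N (Rn (nZ q).1) (nZ q).1 Hcov (fun i => Xs i w) HxN T).
Qed.
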